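(* Let $\chi,a,b,\lambda,\mu$ be positive constants with $b>2\chi\mu$. Consider the system \[ \begin{cases} \phi''-\chi(\phi\psi')'+\phi(a-b\phi)=0, & x\in\mathbb{R},\\ \psi''-\lambda\psi+\mu\phi=0, & x\in\mathbb{R}. \end{cases} \] Then $(\phi,\psi)\equiv\left(\frac{a}{b},\frac{a\mu}{b\lambda}\right)$ is the unique solution of this system with $\phi,\psi\in C^b_{\rm unif}(\mathbb{R})$ and $\inf_{x\in\mathbb{R}}\phi(x)>0$.
   Context: $C^b_{\rm unif}(\mathbb{R})$ denotes the space of bounded, uniformly continuous real functions on $\mathbb{R}$. *)

(* Defs.v *)
From Stdlib Require Import Reals.
From Coquelicot Require Import Coquelicot.
Open Scope R_scope.

Definition bounded_unif_cont (f : R -> R) : Prop :=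
  (exists M : R, forall x : R, Rabs (f x) <= M) /\
  (forall eps : R, 0 < eps -> exists delta : R, 0 < delta /\
     forall x y : R, Rabs (x - y) < delta -> Rabs (f x - f y) < eps).

Definition is_solution (chi a b lambda mu : R) (phi psi : R -> R) : Prop :=
  (forall x : R, ex_derive phi x /\ ex_derive (Derive phi) x) /\
  (forall x : R, ex_derive psi x /\ ex_derive (Derive psi) x) /\
  (forall x : R,
     Derive (Derive phi) x
     - chi * Derive (fun y => phi y * Derive psi y) x
     + phi x * (a - b * phi x) = 0) /\
  (forall x : R,
     Derive (Derive psi) x - lambda * psi x + mu * phi x = 0).

(* Main.v *)
Require Import Defs.
From Stdlib Require Import Reals Lra Psatz.
From Coquelicot Require Import Coquelicot.
Open Scope R_scope.

Definition w (x : R) := sqrt (1 + x^2).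
Definition wd (x : R) := x / w x.
Definition wdd (x : R) := / (w x ^ 3).

Lemma w_sq x : w x * w x = 1 + x^2.
Proof. unfold w. apply sqrt_sqrt. nra. Qed.
Lemma w_ge1 x : 1 <= w x.
Proof. unfold w. assert (sqrt 1 <= sqrt (1+x^2)) by (apply sqrt_le_1_alt; nra). rewrite sqrt_1 in H. exact H. Qed.
Lemma w_ge_abs x : Rabs x <= w x.
Proof. pose proof (w_sq x). pose proof (w_ge1 x).
  destruct (Rle_or_lt (Rabs x) (w x)) as [h|h]; auto.
  exfalso. pose proof (Rabs_pos x). assert (Rabs x * Rabs x = x^2).
  { rewrite <- Rabs_mult. rewrite Rabs_right; [ring|nra]. } nra. Qed.
Lemma wd_bound x : Rabs (wd x) <= 1.
Proof. unfold wd. pose proof (w_ge1 x). rewrite Rabs_div by lra.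
  rewrite (Rabs_right (w x)) by lra. apply Rle_div_l; [lra|]. pose proof (w_ge_abs x). lra. Qed.
Lemma wdd_bound x : Rabs (wdd x) <= 1.
Proof. unfold wdd. pose proof (w_ge1 x).
  assert (1 <= w x ^ 3) by (pose proof (pow_R1_Rle (w x) 3 H); lra).
  rewrite Rabs_right. rewrite <- Rinv_1. apply Rinv_le_contravar; lra.
  left. apply Rinv_0_lt_compat. lra. Qed.
Lemma w_der x : is_derive w x (wd x).
Proof. unfold w, wd, w. auto_derive. nra. pose proof (w_ge1 x). unfold w in H.
  replace (1 + x*(x*1)) with (1+x^2) by ring. field. lra. Qed.
Lemma wd_der x : is_derive wd x (wdd x).
Proof. pose proof (w_ge1 x) as H1. pose proof (w_sq x) as H2. unfold wd, wdd, w in *. auto_derive.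
  replace (1 + x*(x*1)) with (1+x^2) by ring. repeat split; [nra|lra].
  replace (1 + x*(x*1)) with (1+x^2) by ring. set (s := sqrt (1+x^2)) in *.
  assert (E: x*x = s*s - 1) by lra. field_simplify; [|lra|lra]. replace (s^2 - x^2) with 1 by nra. reflexivity. Qed.

Lemma der_pos_up (z : R -> R) (x l : R) : is_derive z x l -> 0 < l -> exists y, z x < z y.
Proof. intros Hd Hl. apply is_derive_Reals in Hd. destruct (Hd l Hl) as [d Hd'].
  pose (h := pos d / 2). assert (0 < h) by (unfold h; destruct d; simpl; lra).
  assert (h <> 0) by lra. assert (Rabs h < d) by (rewrite Rabs_right; unfold h; destruct d; simpl in *; lra).
  specialize (Hd' h H0 H1). exists (x+h). apply Rabs_def2 in Hd'. destruct Hd' as [_ Hd'].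
  assert (0 < (z (x+h) - z x)/h) by lra.
  assert (0 < (z (x+h) - z x)/h * h) by (apply Rmult_lt_0_compat; lra).
  replace ((z (x+h) - z x)/h * h) with (z (x+h) - z x) in H3 by (field; lra). lra. Qed.

Lemma der_neg_up (z : R -> R) (x l : R) : is_derive z x l -> l < 0 -> exists y, z x < z y.
Proof. intros Hd Hl. apply is_derive_Reals in Hd. destruct (Hd (-l) ltac:(lra)) as [d Hd'].
  pose (h := - (pos d / 2)). assert (h < 0) by (unfold h; destruct d; simpl; lra).
  assert (h <> 0) by lra. assert (Rabs h < d) by (rewrite Rabs_left; unfold h; destruct d; simpl in *; lra).
  specialize (Hd' h H0 H1). exists (x+h). apply Rabs_def2 in Hd'. destruct Hd' as [Hd' _].
  assert ((z (x+h) - z x)/h < 0) by lra.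
  assert (0 < (z (x+h) - z x)/h * h) by (nra).
  replace ((z (x+h) - z x)/h * h) with (z (x+h) - z x) in H3 by (field; lra). lra. Qed.


Lemma localmax (z g : R -> R) (x1 d : R) : (forall y, z y <= z x1) -> (forall y, is_derive z y (g y)) ->
  is_derive g x1 d -> g x1 = 0 /\ d <= 0.
Proof. intros Hm Hz Hg.
  assert (G0 : g x1 = 0).
  { destruct (Rtotal_order (g x1) 0) as [h|[h|h]]; auto; exfalso.
    - destruct (der_neg_up z x1 (g x1) (Hz x1) h) as [y Hy]. specialize (Hm y). lra.
    - destruct (der_pos_up z x1 (g x1) (Hz x1) h) as [y Hy]. specialize (Hm y). lra. }
  split; auto. destruct (Rle_or_lt d 0) as [h|h]; auto. exfalso.
  apply is_derive_Reals in Hg. destruct (Hg d h) as [e He].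
  pose (y := x1 + pos e / 2). assert (Hy: x1 < y) by (unfold y; destruct e; simpl; lra).
  destruct (MVT_cor2 z g x1 y Hy) as [c [Hc1 Hc2]].
  { intros. apply is_derive_Reals. apply Hz. }
  assert (Hhc: c - x1 <> 0) by lra.
  assert (Hce : c - x1 < e). { assert (pos e / 2 < e) by (destruct e; simpl; lra). unfold y in Hc2. lra. }
  assert (Rabs (c - x1) < e). { rewrite Rabs_right. lra. lra. }
  specialize (He (c - x1) Hhc H). replace (x1 + (c - x1)) with c in He by ring.
  rewrite G0 in He. apply Rabs_def2 in He. destruct He as [_ He].
  assert (0 < (g c - 0)/(c - x1)) by lra.
  assert (0 < (g c - 0)/(c - x1) * (c - x1)) by (apply Rmult_lt_0_compat; lra).
  replace ((g c - 0)/(c - x1) * (c - x1)) with (g c) in H1 by (field; lra).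
  specialize (Hm y). assert (0 < g c * (y - x1)) by (apply Rmult_lt_0_compat; lra). lra. Qed.

Lemma attain_max (z g : R -> R) (K e x0 : R) : 0 < e -> (forall y, is_derive z y (g y)) ->
  (forall y, z y <= K - e * Rabs y) -> exists x1, forall y, z y <= z x1.
Proof. intros He Hz Hb.
  pose (R0 := Rabs x0 + Rabs ((K - z x0)/e) + 1).
  assert (HR : Rabs x0 < R0) by (unfold R0; pose proof (Rabs_pos ((K - z x0)/e)); lra).
  destruct (continuity_ab_maj z (-R0) R0) as [M [HM1 HM2]].
  { pose proof (Rabs_pos x0). lra. }
  { intros c _. apply derivable_continuous_pt. exists (g c). apply is_derive_Reals, Hz. }
  exists M. intros y. destruct (Rle_or_lt (Rabs y) R0) as [h|h].
  - apply HM1. apply Rabs_le_between in h. exact h.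
  - assert (z x0 <= z M) by (apply HM1; apply Rabs_le_between; lra).
    assert ((K - z x0)/e < Rabs y) by (pose proof (Rle_abs ((K - z x0)/e)); unfold R0 in h; pose proof (Rabs_pos x0); lra).
    assert (K - z x0 < e * Rabs y).
    { apply (Rmult_lt_compat_l e) in H0; auto. replace (e * ((K - z x0)/e)) with (K - z x0) in H0 by (field; lra). exact H0. }
    specialize (Hb y). lra. Qed.

Lemma maxlemma (f f1 f2 : R -> R) (K x0 e : R) : 0 < e ->
  (forall x, is_derive f x (f1 x)) -> (forall x, is_derive f1 x (f2 x)) -> (forall x, f x <= K) ->
  exists x1, f x0 - e * w x0 <= f x1 /\ Rabs (f1 x1) <= e /\ f2 x1 <= e.
Proof. intros He Hf Hf1 HK.
  pose (z := fun x => f x - e * w x). pose (g := fun x => f1 x - e * wd x).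
  assert (Hz : forall y, is_derive z y (g y)).
  { intros y. exact (is_derive_minus _ _ y _ _ (Hf y) (is_derive_scal w y e _ (w_der y))). }
  assert (Hg : forall y, is_derive g y (f2 y - e * wdd y)).
  { intros y. exact (is_derive_minus _ _ y _ _ (Hf1 y) (is_derive_scal wd y e _ (wd_der y))). }
  destruct (attain_max z g K e x0 He Hz) as [x1 Hx1].
  { intros y. unfold z. pose proof (HK y). pose proof (w_ge_abs y).
    assert (e * Rabs y <= e * w y) by (apply Rmult_le_compat_l; lra). lra. }
  destruct (localmax z g x1 _ Hx1 Hz (Hg x1)) as [G0 D0].
  exists x1. unfold g in G0. split; [|split].
  - specialize (Hx1 x0). unfold z in Hx1. pose proof (w_ge1 x1). nra.
  - replace (f1 x1) with (e * wd x1) by lra. rewrite Rabs_mult, (Rabs_right e) by lra.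
    pose proof (wd_bound x1). pose proof (Rabs_pos (wd x1)). nra.
  - pose proof (wdd_bound x1). pose proof (Rle_abs (wdd x1)). nra.
Qed.

Lemma dbound (f f1 f2 : R -> R) (K L : R) :
  (forall x, is_derive f x (f1 x)) -> (forall x, is_derive f1 x (f2 x)) ->
  (forall x, Rabs (f x) <= K) -> (forall x, Rabs (f2 x) <= L) -> forall x, Rabs (f1 x) <= 2 * K + L.
Proof. intros Hf Hf1 HK HL x.
  destruct (MVT_cor2 f f1 x (x+1) ltac:(lra)) as [c [Hc1 Hc2]].
  { intros. apply is_derive_Reals. apply Hf. }
  replace (x + 1 - x) with 1 in Hc1 by ring.
  assert (Rabs (f1 c) <= 2 * K).
  { rewrite <- (Rmult_1_r (f1 c)), <- Hc1. pose proof (HK (x+1)). pose proof (HK x).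
    pose proof (Rabs_triang (f (x+1)) (- f x)). rewrite Rabs_Ropp in H1. unfold Rminus. lra. }
  destruct (MVT_cor2 f1 f2 x c ltac:(lra)) as [d [Hd1 Hd2]].
  { intros. apply is_derive_Reals. apply Hf1. }
  assert (Rabs (f1 c - f1 x) <= L).
  { rewrite Hd1, Rabs_mult. pose proof (HL d). pose proof (Rabs_pos (f2 d)).
    rewrite (Rabs_right (c - x)) by lra. nra. }
  pose proof (Rabs_triang (f1 c) (- (f1 c - f1 x))). rewrite Rabs_Ropp in H1.
  replace (f1 c + - (f1 c - f1 x)) with (f1 x) in H1 by ring. lra. Qed.

Lemma eps_le (X Y C : R) : 0 <= C -> (forall e, 0 < e -> X <= Y + e * C) -> X <= Y.
Proof. intros HC H. destruct (Rle_or_lt X Y) as [h|h]; auto.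
  pose (e := (X - Y) / (2 * (C + 1))). assert (He : 0 < e) by (unfold e; apply Rdiv_lt_0_compat; lra).
  assert (E : e * (C + 1) = (X - Y) / 2) by (unfold e; field; lra).
  specialize (H e He). nra. Qed.

Lemma div_pos_lb (p q r d : R) : 0 < d -> d <= p -> 0 <= r -> - r <= p * q -> - (r / d) <= q.
Proof. intros. destruct (Rle_or_lt 0 q). assert (0 <= r / d) by (apply Rdiv_le_0_compat; lra). lra.
  assert (p * q <= d * q) by nra. assert (- r <= d * q) by lra.
  apply (Rmult_le_reg_l d); [lra|]. replace (d * - (r / d)) with (- r) by (field; lra). lra. Qed.
Lemma div_pos_ub (p q r d : R) : 0 < d -> d <= p -> 0 <= r -> p * q <= r -> q <= r / d.
Proof. intros. destruct (Rle_or_lt q 0). assert (0 <= r / d) by (apply Rdiv_le_0_compat; lra). lra.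
  assert (d * q <= p * q) by nra.
  apply (Rmult_le_reg_l d); [lra|]. replace (d * (r / d)) with r by (field; lra). lra. Qed.

Theorem lemma2p2 (chi a b lambda mu : R)
  (Hchi : 0 < chi) (Ha : 0 < a) (Hb : 0 < b) (Hlambda : 0 < lambda) (Hmu : 0 < mu)
  (Hbig : b > 2 * chi * mu) :
  is_solution chi a b lambda mu (fun _ => a / b) (fun _ => a * mu / (b * lambda)) /\
  (forall phi psi : R -> R,
     is_solution chi a b lambda mu phi psi ->
     bounded_unif_cont phi -> bounded_unif_cont psi ->
     (exists delta : R, 0 < delta /\ forall x : R, delta <= phi x) ->
     (forall x : R, phi x = a / b /\ psi x = a * mu / (b * lambda))).
Proof.
  split.
  { assert (DD : forall c x, Derive (Derive (fun _ : R => c)) x = 0).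
    { intros c x. rewrite (Derive_ext (Derive (fun _ : R => c)) (fun _ => 0)) by (intros; apply Derive_const).
      apply Derive_const. }
    assert (ED : forall c x, ex_derive (Derive (fun _ : R => c)) x).
    { intros c x. apply (ex_derive_ext (fun _ => 0)); [intros; rewrite Derive_const; reflexivity|].
      apply ex_derive_const. }
    split; [|split; [|split]].
    - intros x; split; [apply ex_derive_const|apply ED].
    - intros x; split; [apply ex_derive_const|apply ED].
    - intros x. rewrite DD.
      rewrite (Derive_ext (fun y => a / b * Derive (fun _ : R => a * mu / (b * lambda)) y) (fun _ => 0))
        by (intros; rewrite Derive_const; ring).
      rewrite Derive_const. field. lra.
    - intros x. rewrite DD. field. lra. }
  intros phi psi [Hp [Hq [E1 E2]]] [[Kp HKp] _] [[Kq HKq] _] [dl [Hdl Hphil]].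
  assert (dP : forall x, is_derive phi x (Derive phi x)) by (intros; apply Derive_correct, Hp).
  assert (ddP : forall x, is_derive (Derive phi) x (Derive (Derive phi) x)) by (intros; apply Derive_correct, Hp).
  assert (dQ : forall x, is_derive psi x (Derive psi x)) by (intros; apply Derive_correct, Hq).
  assert (ddQ : forall x, is_derive (Derive psi) x (Derive (Derive psi) x)) by (intros; apply Derive_correct, Hq).
  assert (E1' : forall x, Derive (Derive phi) x - chi * (Derive phi x * Derive psi x + phi x * Derive (Derive psi) x)
      + phi x * (a - b * phi x) = 0).
  { intros x. rewrite <- Derive_mult by (apply Hp || apply Hq). apply E1. }
  assert (E2' : forall x, Derive (Derive psi) x = lambda * psi x - mu * phi x) by (intros x; specialize (E2 x); lra).
  set (p1 := Derive phi) in *. set (p2 := Derive (Derive phi)) in *.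
  set (q1 := Derive psi) in *. set (q2 := Derive (Derive psi)) in *.
  set (L := lambda * Kq + mu * Kp).
  assert (Hq2 : forall x, Rabs (q2 x) <= L).
  { intros x. rewrite E2'. unfold Rminus. eapply Rle_trans; [apply Rabs_triang|].
    rewrite Rabs_Ropp, !Rabs_mult, (Rabs_right lambda), (Rabs_right mu) by lra.
    pose proof (HKp x). pose proof (HKq x). unfold L. nra. }
  set (P := 2 * Kq + L).
  assert (HP : forall x, Rabs (q1 x) <= P) by (apply (dbound psi q1 q2 Kq L dQ ddQ HKq Hq2)).
  assert (HP0 : 0 <= P) by (pose proof (HP 0); pose proof (Rabs_pos (q1 0)); lra).
  destruct (completeness (fun y => exists x, y = phi x)) as [M [HM1 HM2]].
  { exists Kp. intros y [x ->]. pose proof (HKp x). pose proof (Rle_abs (phi x)). lra. }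
  { exists (phi 0). exists 0. reflexivity. }
  destruct (completeness (fun y => exists x, y = - phi x)) as [M' [HM1' HM2']].
  { exists Kp. intros y [x ->]. pose proof (HKp x). pose proof (Rle_abs (- phi x)). rewrite Rabs_Ropp in H0. lra. }
  { exists (- phi 0). exists 0. reflexivity. }
  set (m := - M').
  assert (Hup : forall x, phi x <= M) by (intros x; apply HM1; exists x; reflexivity).
  assert (Hlo : forall x, m <= phi x) by (intros x; assert (- phi x <= M') by (apply HM1'; exists x; reflexivity); unfold m; lra).
  assert (HMl : forall c, (forall x, phi x <= c) -> M <= c) by (intros c Hc; apply HM2; intros y [x ->]; apply Hc).
  assert (Hml : forall c, (forall x, c <= phi x) -> c <= m).
  { intros c Hc. assert (M' <= - c) by (apply HM2'; intros y [x ->]; specialize (Hc x); lra). unfold m; lra. }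
  pose proof (w_ge1 0) as Hw0.
  assert (PsiU : forall x0, lambda * psi x0 <= mu * M).
  { intros x0. apply (eps_le _ _ (1 + lambda * w x0)). { pose proof (w_ge1 x0). nra. }
    intros e He. destruct (maxlemma psi q1 q2 Kq x0 e He dQ ddQ) as [x1 [A [B C]]].
    { intros x. pose proof (HKq x). pose proof (Rle_abs (psi x)). lra. }
    rewrite E2' in C. pose proof (Hup x1).
    assert (lambda * (psi x0 - e * w x0) <= lambda * psi x1) by (apply Rmult_le_compat_l; lra).
    assert (mu * phi x1 <= mu * M) by (apply Rmult_le_compat_l; lra). nra. }
  assert (PsiL : forall x0, mu * m <= lambda * psi x0).
  { intros x0. apply (eps_le _ _ (1 + lambda * w x0)). { pose proof (w_ge1 x0). nra. }
    intros e He. destruct (maxlemma (fun x => - psi x) (fun x => - q1 x) (fun x => - q2 x) Kq x0 e He) as [x1 [A [B C]]].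
    { intros x. exact (is_derive_opp _ x _ (dQ x)). }
    { intros x. exact (is_derive_opp _ x _ (ddQ x)). }
    { intros x. pose proof (HKq x). pose proof (Rle_abs (- psi x)). rewrite Rabs_Ropp in H0. lra. }
    simpl in C. rewrite E2' in C. pose proof (Hlo x1).
    assert (lambda * (psi x1 - e * w x0) <= lambda * psi x0) by (apply Rmult_le_compat_l; lra).
    assert (mu * m <= mu * phi x1) by (apply Rmult_le_compat_l; lra). nra. }
  set (B := b - chi * mu).
  assert (HB : 0 < B) by (unfold B; nra).
  assert (HBS : 0 < B - chi * mu) by (unfold B; lra).
  assert (HcP : 0 <= chi * P) by (apply Rmult_le_pos; lra).
  assert (Hr : forall e, 0 < e -> 0 <= e * (1 + chi * P)) by (intros; apply Rmult_le_pos; lra).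
  assert (PhiU : forall x0, B * phi x0 <= a - chi * mu * m).
  { intros x0. apply (eps_le _ _ ((1 + chi * P) / dl + B * w x0)).
    { pose proof (w_ge1 x0). assert (0 <= (1 + chi * P) / dl) by (apply Rdiv_le_0_compat; nra). nra. }
    intros e He. destruct (maxlemma phi p1 p2 Kp x0 e He dP ddP) as [x1 [A [B' C]]].
    { intros x. pose proof (HKp x). pose proof (Rle_abs (phi x)). lra. }
    set (Q := a - chi * lambda * psi x1 - B * phi x1).
    assert (HQ : phi x1 * Q = chi * (p1 x1 * q1 x1) - p2 x1).
    { pose proof (E1' x1) as E. rewrite E2' in E. apply Rminus_diag_uniq. rewrite <- E. unfold Q, B, p2, p1. ring. }
    assert (Rabs (p1 x1 * q1 x1) <= e * P).
    { rewrite Rabs_mult. apply Rmult_le_compat; auto using Rabs_pos. }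
    pose proof (Rle_abs (- (p1 x1 * q1 x1))). rewrite Rabs_Ropp in H0.
    assert (chi * (- (p1 x1 * q1 x1)) <= chi * (e * P)) by (apply Rmult_le_compat_l; lra).
    assert (- (e * (1 + chi * P)) <= phi x1 * Q) by (rewrite HQ; nra).
    pose proof (div_pos_lb (phi x1) Q _ dl Hdl (Hphil x1) (Hr e He) H2).
    pose proof (PsiL x1).
    assert (chi * (mu * m) <= chi * (lambda * psi x1)) by (apply Rmult_le_compat_l; lra).
    assert (B * (phi x0 - e * w x0) <= B * phi x1) by (apply Rmult_le_compat_l; lra).
    assert (e * ((1 + chi * P) / dl + B * w x0) = e * (1 + chi * P) / dl + B * (e * w x0)) by (field; lra).
    unfold Q in H3. nra. }
  assert (PhiL : forall x0, a - chi * mu * M <= B * phi x0).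
  { intros x0. apply (eps_le _ _ ((1 + chi * P) / dl + B * w x0)).
    { pose proof (w_ge1 x0). assert (0 <= (1 + chi * P) / dl) by (apply Rdiv_le_0_compat; nra). nra. }
    intros e He. destruct (maxlemma (fun x => - phi x) (fun x => - p1 x) (fun x => - p2 x) Kp x0 e He) as [x1 [A [B' C]]].
    { intros x. exact (is_derive_opp _ x _ (dP x)). }
    { intros x. exact (is_derive_opp _ x _ (ddP x)). }
    { intros x. pose proof (HKp x). pose proof (Rle_abs (- phi x)). rewrite Rabs_Ropp in H0. lra. }
    rewrite Rabs_Ropp in B'. simpl in C.
    set (Q := a - chi * lambda * psi x1 - B * phi x1).
    assert (HQ : phi x1 * Q = chi * (p1 x1 * q1 x1) - p2 x1).
    { pose proof (E1' x1) as E. rewrite E2' in E. apply Rminus_diag_uniq. rewrite <- E. unfold Q, B, p2, p1. ring. }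
    assert (Rabs (p1 x1 * q1 x1) <= e * P).
    { rewrite Rabs_mult. apply Rmult_le_compat; auto using Rabs_pos. }
    pose proof (Rle_abs (p1 x1 * q1 x1)).
    assert (chi * (p1 x1 * q1 x1) <= chi * (e * P)) by (apply Rmult_le_compat_l; lra).
    assert (phi x1 * Q <= e * (1 + chi * P)) by (rewrite HQ; nra).
    pose proof (div_pos_ub (phi x1) Q _ dl Hdl (Hphil x1) (Hr e He) H2).
    pose proof (PsiU x1).
    assert (chi * (lambda * psi x1) <= chi * (mu * M)) by (apply Rmult_le_compat_l; lra).
    assert (B * phi x1 <= B * (phi x0 + e * w x0)) by (apply Rmult_le_compat_l; lra).
    assert (e * ((1 + chi * P) / dl + B * w x0) = e * (1 + chi * P) / dl + B * (e * w x0)) by (field; lra).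
    unfold Q in H3. nra. }
  assert (U : B * M <= a - chi * mu * m).
  { assert (M <= (a - chi * mu * m) / B).
    { apply HMl. intros x. apply (Rmult_le_reg_l B); [lra|].
      replace (B * ((a - chi * mu * m) / B)) with (a - chi * mu * m) by (field; lra). apply PhiU. }
    apply (Rmult_le_compat_l B) in H; [|lra].
    replace (B * ((a - chi * mu * m) / B)) with (a - chi * mu * m) in H by (field; lra). exact H. }
  assert (Lw : a - chi * mu * M <= B * m).
  { assert ((a - chi * mu * M) / B <= m).
    { apply Hml. intros x. apply (Rmult_le_reg_l B); [lra|].
      replace (B * ((a - chi * mu * M) / B)) with (a - chi * mu * M) by (field; lra). apply PhiL. }
    apply (Rmult_le_compat_l B) in H; [|lra].
    replace (B * ((a - chi * mu * M) / B)) with (a - chi * mu * M) in H by (field; lra). exact H. }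
  assert (Hmm : m <= M) by (pose proof (Hlo 0); pose proof (Hup 0); lra).
  assert (HMm : M = m) by nra.
  assert (HMv : M = a / b).
  { apply (Rmult_eq_reg_l b); [|lra]. field_simplify; [|lra]. unfold B in *. nra. }
  intros x. pose proof (Hlo x). pose proof (Hup x). pose proof (PsiU x). pose proof (PsiL x).
  split. lra.
  apply (Rmult_eq_reg_l lambda); [|lra]. replace (lambda * (a * mu / (b * lambda))) with (mu * (a / b)) by (field; lra).
  rewrite <- HMv. rewrite HMm in *. lra.
Qed.
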